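(* The equation $$((a\to b)\to(c\to b))\cap(a\to c)\cap(b\to a)\le c\to a$$ holds in every orthomodular lattice admitting a strong set of states, but fails in the orthomodular lattice MG1.
   Context: Write $a\to b=a'\cup(a\cap b)$. A state on an ortholattice $L$ is a map $m:L\to[0,1]$ with $m(1)=1$ and $a\le b'\Rightarrow m(a\cup b)=m(a)+m(b)$. $L$ admits a strong set of states if there is a nonempty set $S$ of states such that for all $a,b\in L$ with $a\not\le b$ some $m\in S$ has $m(a)=1$ and $m(b)\ne1$. MG1 is the orthomodular lattice of the Greechie diagram with 19 atoms $v,e_1,e_2,e_3,a_1,a_2,a_3,b_1,b_2,b_3,c_1,c_2,c_3,d_1,d_2,d_3,f_1,f_2,u$ and 11 three-atom blocks: $\{v,e_1,a_1\}$, $\{v,e_2,a_2\}$, $\{v,e_3,a_3\}$, $\{a_1,b_1,c_1\}$, $\{a_2,b_2,c_2\}$, $\{a_3,b_3,c_3\}$, $\{b_1,b_2,b_3\}$, $\{c_1,f_1,d_1\}$, $\{c_2,f_2,d_2\}$, $\{c_3,u,d_3\}$, $\{d_1,d_2,d_3\}$. That is, it is the unique orthomodular lattice whose atoms are these and whose maximal Boolean subalgebras are generated by these blocks; each block consists of mutually orthogonal atoms with join $1$. *)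

(* Defs.v *)
From Stdlib Require Import Reals List Bool.
Import ListNotations.
Open Scope R_scope.

Record OLops := {
  car   : Type;
  ojoin : car -> car -> car;
  omeet : car -> car -> car;
  ocompl: car -> car;
  ozero : car;
  oone  : car
}.

Definition ole (L : OLops) (a b : car L) : Prop := omeet L a b = a.

Definition is_ortholattice (L : OLops) : Prop :=
  (forall a b, ojoin L a b = ojoin L b a) /\
  (forall a b, omeet L a b = omeet L b a) /\
  (forall a b c, ojoin L a (ojoin L b c) = ojoin L (ojoin L a b) c) /\
  (forall a b c, omeet L a (omeet L b c) = omeet L (omeet L a b) c) /\
  (forall a b, ojoin L a (omeet L a b) = a) /\
  (forall a b, omeet L a (ojoin L a b) = a) /\
  (forall a, ole L (ozero L) a) /\
  (forall a, ole L a (oone L)) /\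
  (forall a, ocompl L (ocompl L a) = a) /\
  (forall a b, ole L a b -> ole L (ocompl L b) (ocompl L a)) /\
  (forall a, omeet L a (ocompl L a) = ozero L) /\
  (forall a, ojoin L a (ocompl L a) = oone L).

Definition is_OML (L : OLops) : Prop :=
  is_ortholattice L /\
  (forall a b, ole L a b -> b = ojoin L a (omeet L b (ocompl L a))).

Definition oimp (L : OLops) (a b : car L) : car L :=
  ojoin L (ocompl L a) (omeet L a b).

Definition is_state (L : OLops) (m : car L -> R) : Prop :=
  (forall a, 0 <= m a <= 1) /\
  m (oone L) = 1 /\
  (forall a b, ole L a (ocompl L b) -> m (ojoin L a b) = m a + m b).

Definition admits_strong_set_of_states (L : OLops) : Prop :=
  exists S : (car L -> R) -> Prop,
    (exists m, S m) /\
    (forall m, S m -> is_state L m) /\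
    (forall a b, ~ ole L a b -> exists m, S m /\ m a = 1 /\ m b <> 1).

Definition eqn_holds_at (L : OLops) (a b c : car L) : Prop :=
  ole L (omeet L (omeet L (oimp L (oimp L a b) (oimp L c b)) (oimp L a c))
                 (oimp L b a))
        (oimp L c a).

Inductive atom : Set :=
  v | e1 | e2 | e3 | a1 | a2 | a3 | b1 | b2 | b3 | c1 | c2 | c3
  | d1 | d2 | d3 | f1 | f2 | u.

Scheme Equality for atom.

Definition all_atoms : list atom :=
  [v; e1; e2; e3; a1; a2; a3; b1; b2; b3; c1; c2; c3; d1; d2; d3; f1; f2; u].

Definition MG1_blocks : list (atom * atom * atom) :=
  [(v, e1, a1); (v, e2, a2); (v, e3, a3);
   (a1, b1, c1); (a2, b2, c2); (a3, b3, c3);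
   (b1, b2, b3);
   (c1, f1, d1); (c2, f2, d2); (c3, u, d3);
   (d1, d2, d3)].

Definition in_block (x : atom) (bl : atom * atom * atom) : bool :=
  match bl with (p, q, r) => atom_beq x p || atom_beq x q || atom_beq x r end.

Definition orth (x y : atom) : bool :=
  negb (atom_beq x y) &&
  existsb (fun bl => in_block x bl && in_block y bl) MG1_blocks.

(* Elements of the Greechie lattice with 3-atom blocks:
   0, 1, the atoms x, and their orthocomplements x' (coatoms). *)
Inductive MG1_elt : Set :=
  | Zero | One | At (x : atom) | Co (x : atom).

Definition MG1_elts : list MG1_elt :=
  [Zero; One] ++ map At all_atoms ++ map Co all_atoms.

Definition MG1_leb (p q : MG1_elt) : bool :=
  match p, q with
  | Zero, _ => true
  | _, One => true
  | At x, At y => atom_beq x y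
  | At x, Co y => orth x y
  | Co x, Co y => atom_beq x y
  | _, _ => false
  end.

Definition MG1_compl (p : MG1_elt) : MG1_elt :=
  match p with Zero => One | One => Zero | At x => Co x | Co x => At x end.

Definition MG1_join (p q : MG1_elt) : MG1_elt :=
  let ub w := MG1_leb p w && MG1_leb q w in
  match find (fun w => ub w && forallb (fun w' => negb (ub w') || MG1_leb w w') MG1_elts)
             MG1_elts with
  | Some w => w | None => One end.

Definition MG1_meet (p q : MG1_elt) : MG1_elt :=
  let lb w := MG1_leb w p && MG1_leb w q in
  match find (fun w => lb w && forallb (fun w' => negb (lb w') || MG1_leb w' w) MG1_elts)
             MG1_elts with
  | Some w => w | None => Zero end.

Definition MG1 : OLops := {|
  car := MG1_elt;
  ojoin := MG1_join;
  omeet := MG1_meet;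
  ocompl := MG1_compl;
  ozero := Zero;
  oone := One
|}.

(* Main.v *)
Require Import Defs.
From Stdlib Require Import Reals Lra Classical List Bool.
Import ListNotations.
Open Scope R_scope.

Section Gen.
Variable L : OLops.
Hypothesis HL : is_OML L.

Notation j := (ojoin L).
Notation mt := (omeet L).
Notation cp := (ocompl L).

Lemma jc a b : j a b = j b a. Proof. apply HL. Qed.
Lemma mc a b : mt a b = mt b a. Proof. apply HL. Qed.
Lemma ma a b c : mt a (mt b c) = mt (mt a b) c. Proof. apply HL. Qed.
Lemma abs1 a b : j a (mt a b) = a. Proof. apply HL. Qed.
Lemma abs2 a b : mt a (j a b) = a. Proof. apply HL. Qed.
Lemma cc a : cp (cp a) = a. Proof. apply HL. Qed.
Lemma canti a b : ole L a b -> ole L (cp b) (cp a). Proof. apply HL. Qed.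
Lemma cj a : j a (cp a) = oone L. Proof. apply HL. Qed.
Lemma om a b : ole L a b -> b = j a (mt b (cp a)). Proof. apply HL. Qed.

Lemma midem a : mt a a = a.
Proof. rewrite <- (abs1 a a) at 2. apply abs2. Qed.

Lemma ole_refl a : ole L a a. Proof. apply midem. Qed.

Lemma ole_meetl a b : ole L (mt a b) a.
Proof. unfold ole. rewrite mc, ma, midem. reflexivity. Qed.

Lemma ole_meetr a b : ole L (mt a b) b.
Proof. rewrite mc. apply ole_meetl. Qed.

Variable m : car L -> R.
Hypothesis Hm : is_state L m.

Lemma mb a : 0 <= m a <= 1. Proof. apply Hm. Qed.

Lemma mmono a b : ole L a b -> m a <= m b.
Proof.
  intro H. pose proof (om a b H) as E.
  assert (H2 : ole L a (cp (mt b (cp a)))).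
  { rewrite <- (cc a) at 1. apply canti. apply ole_meetr. }
  destruct Hm as [_ [_ Hadd]].
  rewrite E. rewrite (Hadd _ _ H2). pose proof (mb (mt b (cp a))). lra.
Qed.

Lemma mcompl a : m (cp a) = 1 - m a.
Proof.
  destruct Hm as [_ [H1 Hadd]].
  assert (H2 : ole L a (cp (cp a))) by (rewrite cc; apply ole_refl).
  pose proof (Hadd _ _ H2). rewrite cj, H1 in H. lra.
Qed.

Lemma mimp a b : m (oimp L a b) = 1 - m a + m (mt a b).
Proof.
  destruct Hm as [_ [H1 Hadd]]. unfold oimp.
  assert (H2 : ole L (cp a) (cp (mt a b))) by (apply canti; apply ole_meetl).
  rewrite (Hadd _ _ H2). rewrite mcompl. lra.
Qed.

End Gen.

Lemma part1 : forall L : OLops, is_OML L -> admits_strong_set_of_states L ->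
     forall a b c : car L, eqn_holds_at L a b c.
Proof.
  intros L HL [S [_ [HS Hstr]]] a b c.
  unfold eqn_holds_at.
  destruct (classic (ole L (omeet L (omeet L (oimp L (oimp L a b) (oimp L c b)) (oimp L a c))
                 (oimp L b a)) (oimp L c a))) as [H|H]; [exact H|].
  exfalso. destruct (Hstr _ _ H) as [m [Sm [H1 H2]]].
  pose proof (HS m Sm) as Hm.
  set (p := oimp L a b) in *. set (q := oimp L c b) in *.
  pose proof (mmono L HL m Hm _ _ (ole_meetl L HL (omeet L (oimp L p q) (oimp L a c)) (oimp L b a))) as X1.
  pose proof (mmono L HL m Hm _ _ (ole_meetr L HL (omeet L (oimp L p q) (oimp L a c)) (oimp L b a))) as X2.
  pose proof (mmono L HL m Hm _ _ (ole_meetl L HL (oimp L p q) (oimp L a c))) as X3.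
  pose proof (mmono L HL m Hm _ _ (ole_meetr L HL (oimp L p q) (oimp L a c))) as X4.
  pose proof (mb L m Hm (oimp L p q)). pose proof (mb L m Hm (oimp L a c)).
  pose proof (mb L m Hm (oimp L b a)).
  pose proof (mb L m Hm (omeet L (oimp L p q) (oimp L a c))).
  assert (Epq : m (oimp L p q) = 1) by lra.
  assert (Eac : m (oimp L a c) = 1) by lra.
  assert (Eba : m (oimp L b a) = 1) by lra.
  rewrite (mimp L HL m Hm) in Epq, Eac, Eba, H2.
  pose proof (mmono L HL m Hm _ _ (ole_meetr L HL p q)).
  pose proof (mmono L HL m Hm _ _ (ole_meetl L HL b c)).
  pose proof (mmono L HL m Hm _ _ (ole_meetl L HL c a)).
  pose proof (mmono L HL m Hm _ _ (ole_meetl L HL a c)).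
  pose proof (mmono L HL m Hm _ _ (ole_meetr L HL b a)).
  assert (Ep : m p = 1 - m a + m (omeet L a b)) by (unfold p; apply (mimp L HL m Hm)).
  assert (Eq : m q = 1 - m c + m (omeet L c b)) by (unfold q; apply (mimp L HL m Hm)).
  rewrite (mc L HL c b) in Eq. rewrite (mc L HL b a) in Eba.
  rewrite (mc L HL c a) in *.
  pose proof (mb L m Hm a). pose proof (mb L m Hm b). pose proof (mb L m Hm c).
  lra.
Qed.

Definition eqb_e (p q : MG1_elt) : bool :=
  match p, q with
  | Zero, Zero => true | One, One => true
  | At x, At y => atom_beq x y | Co x, Co y => atom_beq x y
  | _, _ => false end.

Lemma atom_beq_ok x y : atom_beq x y = true -> x = y.
Proof. destruct x, y; simpl; congruence. Qed.

Lemma eqb_e_ok p q : eqb_e p q = true -> p = q.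
Proof.
  destruct p, q; simpl; try congruence; intro H; apply atom_beq_ok in H; congruence.
Qed.

Lemma all_in p : In p MG1_elts.
Proof. destruct p as [| |x|x]; try destruct x; vm_compute; tauto. Qed.

Lemma chk1 (f : MG1_elt -> bool) : forallb f MG1_elts = true -> forall p, f p = true.
Proof. intros H p. rewrite forallb_forall in H. apply H, all_in. Qed.

Lemma chk2 (f : MG1_elt -> MG1_elt -> bool) :
  forallb (fun p => forallb (fun q => f p q) MG1_elts) MG1_elts = true -> forall p q, f p q = true.
Proof. intros H p q. exact (chk1 _ (chk1 _ H p) q). Qed.

Lemma chk3 (f : MG1_elt -> MG1_elt -> MG1_elt -> bool) :
  forallb (fun p => forallb (fun q => forallb (fun r => f p q r) MG1_elts) MG1_elts) MG1_elts = true ->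
  forall p q r, f p q r = true.
Proof. intros H p q r. exact (chk1 _ (chk1 _ (chk1 _ H p) q) r). Qed.

Notation leb := MG1_leb.

Lemma le_refl p : leb p p = true.
Proof. apply (chk1 (fun p => leb p p)). vm_compute. reflexivity. Qed.

Lemma le_anti p q : leb p q = true -> leb q p = true -> p = q.
Proof.
  intros H1 H2. apply eqb_e_ok.
  pose proof (chk2 (fun p q => negb (leb p q && leb q p) || eqb_e p q) ltac:(vm_compute; reflexivity) p q).
  cbv beta in H; rewrite H1, H2 in H. exact H.
Qed.

Lemma le_trans p q r : leb p q = true -> leb q r = true -> leb p r = true.
Proof.
  intros H1 H2.
  pose proof (chk3 (fun p q r => negb (leb p q && leb q r) || leb p r) ltac:(vm_compute; reflexivity) p q r).
  cbv beta in H; rewrite H1, H2 in H. exact H.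
Qed.

Definition jspec p q :=
  let w := MG1_join p q in
  leb p w && leb q w && forallb (fun w' => negb (leb p w' && leb q w') || leb w w') MG1_elts.
Definition mspec p q :=
  let w := MG1_meet p q in
  leb w p && leb w q && forallb (fun w' => negb (leb w' p && leb w' q) || leb w' w) MG1_elts.

Lemma join_spec_b : forall p q,
  (leb p (MG1_join p q) && leb q (MG1_join p q) &&
   forallb (fun w' => negb (leb p w' && leb q w') || leb (MG1_join p q) w') MG1_elts) = true.
Proof. exact (chk2 jspec ltac:(vm_compute; reflexivity)). Qed.

Lemma meet_spec_b : forall p q,
  (leb (MG1_meet p q) p && leb (MG1_meet p q) q &&
   forallb (fun w' => negb (leb w' p && leb w' q) || leb w' (MG1_meet p q)) MG1_elts) = true.
Proof. exact (chk2 mspec ltac:(vm_compute; reflexivity)). Qed.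

Lemma join_ub1 p q : leb p (MG1_join p q) = true.
Proof. pose proof (join_spec_b p q). destruct (leb p _); simpl in *; congruence. Qed.
Lemma join_ub2 p q : leb q (MG1_join p q) = true.
Proof. pose proof (join_spec_b p q). destruct (leb q _); rewrite ?andb_false_r in H; simpl in *; congruence. Qed.
Lemma join_least p q r : leb p r = true -> leb q r = true -> leb (MG1_join p q) r = true.
Proof.
  intros H1 H2. pose proof (join_spec_b p q). apply andb_prop in H as [_ H].
  rewrite forallb_forall in H. specialize (H r (all_in r)). rewrite H1, H2 in H. exact H.
Qed.
Lemma meet_lb1 p q : leb (MG1_meet p q) p = true.
Proof. pose proof (meet_spec_b p q). destruct (leb _ p); simpl in *; congruence. Qed.
Lemma meet_lb2 p q : leb (MG1_meet p q) q = true.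
Proof. pose proof (meet_spec_b p q). destruct (leb _ q); rewrite ?andb_false_r in H; simpl in *; congruence. Qed.
Lemma meet_great p q r : leb r p = true -> leb r q = true -> leb r (MG1_meet p q) = true.
Proof.
  intros H1 H2. pose proof (meet_spec_b p q). apply andb_prop in H as [_ H].
  rewrite forallb_forall in H. specialize (H r (all_in r)). rewrite H1, H2 in H. exact H.
Qed.

Lemma ole_iff p q : ole MG1 p q <-> leb p q = true.
Proof.
  unfold ole; simpl. split.
  - intro H. rewrite <- H. apply meet_lb2.
  - intro H. apply le_anti. apply meet_lb1. apply meet_great; auto using le_refl.
Qed.

Lemma MG1_OML : is_OML MG1.
Proof.
  unfold is_OML, is_ortholattice; simpl.
  repeat split.
  - intros a b; apply le_anti; apply join_least; auto using join_ub1, join_ub2.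
  - intros a b; apply le_anti; apply meet_great; auto using meet_lb1, meet_lb2.
  - intros a b c; apply le_anti; repeat apply join_least;
      eauto using join_ub1, join_ub2, le_trans.
  - intros a b c; apply le_anti; repeat apply meet_great;
      eauto using meet_lb1, meet_lb2, le_trans.
  - intros a b; apply le_anti. apply join_least; auto using le_refl, meet_lb1. apply join_ub1.
  - intros a b; apply le_anti. apply meet_lb1. apply meet_great; auto using le_refl, join_ub1.
  - intros a; apply (proj2 (ole_iff a One)); destruct a; reflexivity.
  - intros a; destruct a; reflexivity.
  - intros a b H. apply ole_iff in H. apply (proj2 (ole_iff _ _)).
    pose proof (chk2 (fun p q => negb (leb p q) || leb (MG1_compl q) (MG1_compl p))
      ltac:(vm_compute; reflexivity) a b). cbv beta in H0; rewrite H in H0. exact H0.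
  - intros a. apply eqb_e_ok.
    apply (chk1 (fun p => eqb_e (MG1_meet p (MG1_compl p)) Zero)). vm_compute. reflexivity.
  - intros a. apply eqb_e_ok.
    apply (chk1 (fun p => eqb_e (MG1_join p (MG1_compl p)) One)). vm_compute. reflexivity.
  - intros a b H. apply ole_iff in H. apply eqb_e_ok.
    pose proof (chk2 (fun p q => negb (leb p q) || eqb_e q (MG1_join p (MG1_meet q (MG1_compl p))))
      ltac:(vm_compute; reflexivity) a b). cbv beta in H0; rewrite H in H0. exact H0.
Qed.

Theorem mainTheorem12 :
  (forall L : OLops, is_OML L -> admits_strong_set_of_states L ->
     forall a b c : car L, eqn_holds_at L a b c) /\
  (is_OML MG1 /\ exists a b c : car MG1, ~ eqn_holds_at MG1 a b c).
Proof.
  split; [exact part1|]. split; [exact MG1_OML|].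
  exists (Co Defs.b1), (Co Defs.c2), (Co Defs.d1). unfold eqn_holds_at. rewrite ole_iff.
  vm_compute. discriminate.
Qed.
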